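(* Let $G$ be a finite supersolvable group and $A$ a conjugacy class of $G$. Then $$\operatorname{dl}(G/\mathbf{C}_G(A))\le 2\,\eta(AA^{-1})-1.$$
   Context: For a nonempty subset $X\subseteq G$ that is $G$-invariant (i.e. $g^{-1}Xg=X$ for all $g\in G$), $\eta(X)$ denotes the number of distinct conjugacy classes of $G$ whose union is $X$. For conjugacy classes $A,B$, $AB=\{ab\mid a\in A,b\in B\}$ and $A^{-1}=\{a^{-1}\mid a\in A\}$, so $AA^{-1}=\{ab^{-1}\mid a,b\in A\}$, which is $G$-invariant. $\mathbf{C}_G(A)=\{g\in G\mid g^{-1}ag=a\text{ for all }a\in A\}$. $\operatorname{dl}$ denotes derived length. *)

(* Defs.v *)
From mathcomp Require Import all_boot all_order all_fingroup all_solvable.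
Set Implicit Arguments. Unset Strict Implicit. Unset Printing Implicit Defensive.
Import GroupScope.

Definition supersolvable (gT : finGroupType) (G : {group gT}) : Prop :=
  exists s : seq {group gT},
    [/\ last 1%G s = G,
        all (fun H : {group gT} => H <| G) s &
        path (fun H K : {group gT} => (H \subset K) && cyclic (K / H)) 1%G s].

(* derived length: least n with H^`(n) = 1 (H^`(0) = H); for solvable H this
   is at most #|H|. *)
Definition dl (gT : finGroupType) (H : {set gT}) : nat :=
  find (fun n => H^`(n) == 1) (iota 0 #|H|.+1).

(* eta G X = number of conjugacy classes of G contained in X
   (= number of classes whose union is X when X is G-invariant). *)
Definition eta (gT : finGroupType) (G : {group gT}) (X : {set gT}) : nat :=
  #|[set C in classes G | C \subset X]|.

(* Main.v *)
Require Import Defs.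
From mathcomp Require Import all_boot all_order all_fingroup all_solvable.
Set Implicit Arguments. Unset Strict Implicit. Unset Printing Implicit Defensive.
Import GroupScope.
From mathcomp Require Import zify.

Lemma der_mono (T : finGroupType) (G : {group T}) a b : b <= a -> G^`(a) \subset G^`(b).
Proof.
move=> le; rewrite -(subnK le); elim: (a - b) => [|k IH] //=.
by rewrite addSn; exact: subset_trans (der_subS _ _) IH.
Qed.

Lemma cyclic_der1_cent (T : finGroupType) (G N : {group T}) :
  cyclic N -> G \subset 'N(N) -> G^`(1) \subset 'C(N).
Proof.
move=> cN nNG; rewrite -ker_conj_aut ker_trivg_morphim.
rewrite (subset_trans (der_sub 1 G)) //= morphim_der //.
rewrite (derG1P _) //; apply: abelianS (Aut_conj_aut _ _) (Aut_cyclic_abelian cN).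
Qed.

Lemma affine (T : finGroupType) (Nb K : {group T}) (B : {set T}) :
  abelian Nb -> K \subset 'C(Nb) ->
  (forall U X, U \in K -> X \in B -> [~ X, U] \in Nb) ->
  [~: K, K] \subset 'C(B).
Proof.
move=> aN cKN hyp; rewrite gen_subG; apply/subsetP => z /imset2P [U V UK VK ->].
apply/centP => X XB.
have Ui : U^-1 \in K by rewrite groupV.
have Vi : V^-1 \in K by rewrite groupV.
set a := [~ X, U^-1]; set b := [~ X, V^-1].
have aN' : a \in Nb by apply: hyp.
have bN' : b \in Nb by apply: hyp.
have ca : a ^ V^-1 = a.
  by apply/conjg_fixP/commgP/commute_sym; move/centP: (subsetP cKN _ Vi); apply.
have cb : b ^ U^-1 = b.
  by apply/conjg_fixP/commgP/commute_sym; move/centP: (subsetP cKN _ Ui); apply.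
have ab : a * b = b * a by apply: (centsP aN).
have hA : X ^ U^-1 = X * a by exact: conjg_mulR.
have hB : X ^ V^-1 = X * b by exact: conjg_mulR.
clearbody a b.
have E : X ^ (U^-1 * V^-1) = X ^ (V^-1 * U^-1).
  by rewrite !conjgM hA hB !conjMg ca cb hA hB -!mulgA ab.
have F : X ^ (U^-1 * V^-1 * (V^-1 * U^-1)^-1) = X by rewrite conjgM E conjgK.
have -> : [~ U, V] = U^-1 * V^-1 * (V^-1 * U^-1)^-1.
  by rewrite invMg !invgK commgEl conjgE !mulgA.
by apply/commute_sym/commgP/conjg_fixP.
Qed.
Section Count.
Variable gT : finGroupType.
Variables (G : {group gT}) (A : {set gT}).

Definition SS := [set C in classes G | C \subset A * A^-1].
Definition etaR (M : {set gT}) := #|[set C * M | C in SS]|.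

Lemma etaR_map (M N : {group gT}) : M \subset N ->
  [set C * N | C in SS] = [set D * N | D in [set C * M | C in SS]].
Proof.
move=> sMN; rewrite -imset_comp; apply: eq_imset => C /=.
by rewrite -mulgA (mulGidPr sMN).
Qed.

Lemma etaR_le (M N : {group gT}) : M \subset N -> etaR N <= etaR M.
Proof. by move=> sMN; rewrite /etaR (etaR_map sMN) leq_imset_card. Qed.

Lemma etaR_pos (N : {group gT}) : A != set0 -> 0 < etaR N.
Proof.
case/set0Pn => x xA; apply/card_gt0P; exists (1 ^: G * N); apply: imset_f.
rewrite inE class1G classes1 sub1set /=.
by rewrite -(mulgV x); apply: mem_mulg; rewrite // mem_invg invgK.
Qed.

Lemma etaR_lt (M N : {group gT}) y : G \subset 'N(A) -> M \subset N -> N <| G ->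
  y \in A * A^-1 -> y \in N -> y \notin M -> y \in G -> etaR N < etaR M.
Proof.
move=> nAG sMN nNG yAA yN yM yG; rewrite /etaR (etaR_map sMN).
set SM := [set C * M | C in SS].
set f := fun D : {set gT} => D * (N : {set gT}).
have cyN : y ^: G \subset N.
  apply/subsetP => z /imsetP [g gG ->]; by rewrite memJ_norm ?(subsetP (normal_norm nNG)).
have D1S : y ^: G * M \in SM.
  apply: imset_f; rewrite inE mem_classes //=.
  apply/subsetP => z /imsetP [g gG ->].
  case/mulsgP: yAA => a b aA bA ->; rewrite conjMg mem_mulg //.
    by rewrite memJ_norm ?(subsetP nAG).
  by rewrite mem_invg -conjVg memJ_norm ?(subsetP nAG) // -mem_invg.
have D2S : 1 ^: G * M \in SM.
  apply: imset_f; rewrite inE class1G classes1 sub1set /=.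
  case/mulsgP: yAA => a b aA bA _.
  by rewrite -(mulgV a); apply: mem_mulg; rewrite // mem_invg invgK.
have D12 : y ^: G * M != 1 ^: G * M.
  apply/negP => /eqP E; have : y * 1 \in y ^: G * M by apply: mem_mulg (class_refl _ _) (group1 _).
  by rewrite mulg1 E class1G mul1g (negbTE yM).
have fE : f (y ^: G * M) = f (1 ^: G * M).
  rewrite /f -!mulgA (mulGidPr sMN) class1G mul1g.
  apply/eqP; rewrite eqEsubset; apply/andP; split.
    by rewrite -{2}(mulGid N) mulSg.
  apply/subsetP => n nN; rewrite -(mulKVg y n); apply: mem_mulg; rewrite ?class_refl //.
  by rewrite groupM ?groupV.
have -> : f @: SM = f @: (SM :\ (y ^: G * M)).
  apply/eqP; rewrite eqEsubset [X in _ && X]imsetS ?subD1set // andbT.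
  apply/subsetP => z /imsetP [D DS ->].
  case: (eqVneq D (y ^: G * M)) => [->|ne].
    by rewrite fE imset_f // !inE eq_sym D12.
  by rewrite imset_f // !inE ne.
apply: (leq_ltn_trans (leq_imset_card _ _)).
by rewrite [X in _ < X](cardsD1 (y ^: G * M)) D1S.
Qed.


Hypothesis hA : A \in classes G.

Lemma sAG : A \subset G.
Proof. by case/imsetP: hA => x xG ->; exact: class_subG. Qed.

Lemma nAG : G \subset 'N(A).
Proof. by case/imsetP: hA => x xG ->; exact: class_norm. Qed.

Lemma A0 : A != set0.
Proof. by case/imsetP: hA => x xG ->; apply/set0Pn; exists x; exact: class_refl. Qed.

Lemma step (M N : {group gT}) : M <| G -> N <| G -> M \subset N -> cyclic (N / M) ->
  (forall g x, g \in G^`(2 * etaR N - 1) -> x \in A -> [~ x, g] \in N) ->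
  (forall g x, g \in G^`(2 * etaR M - 1) -> x \in A -> [~ x, g] \in M).
Proof.
move=> nMG nNG sMN cNM IH.
have nMG' := normal_norm nMG; have nNG' := normal_norm nNG.
case: (boolP [exists y in A * A^-1, (y \in N) && (y \notin M)]) =>
   [/exists_inP [y yAA /andP [yN yM]] | /exists_inP noy].
  have yG : y \in G := subsetP (normal_sub nNG) y yN.
  have lt := etaR_lt nAG sMN nNG yAA yN yM yG.
  have pos := etaR_pos N A0.
  set k := 2 * etaR N - 1.
  have hk : k.+2 <= 2 * etaR M - 1 by rewrite /k; lia.
  move=> g x gG xA; have gk2 := subsetP (der_mono G hk) g gG.
  have sGk1 : G^`(k.+1) \subset 'N(M) := subset_trans (der_sub _ _) nMG'.
  have cK : [~: G^`(k.+1) / M, G^`(k.+1) / M] \subset 'C(A / M).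
    apply: (@affine _ (N / M)%G (G^`(k.+1) / M)%G).
    - exact: cyclic_abelian.
    - rewrite /= quotient_der //.
      apply: subset_trans (der_mono _ (isT : 1 <= k.+1)) _.
      exact: cyclic_der1_cent cNM (quotient_norms _ nNG').
    - move=> U X /morphimP [u uNM uK ->] /morphimP [x' xNM xA' ->].
      rewrite -morphR //; apply: mem_quotient; apply: IH _ _ _ xA'.
      exact: subsetP (der_subS k G) u uK.
  rewrite -quotientR // -dergSn in cK.
  have xG : x \in G := subsetP sAG x xA.
  have gG' : g \in G := subsetP (der_sub _ G) g gk2.
  have := subsetP cK _ (mem_quotient M gk2).
  move/centP => c; have cc := c _ (mem_morphim (coset_morphism M) (subsetP nMG' x xG) xA).
  apply: coset_idr; first by rewrite groupR ?(subsetP nMG').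
  rewrite morphR ?(subsetP nMG') //; apply/eqP/commgP/commute_sym; exact: cc.
move=> g x gG xA.
have le := etaR_le sMN.
have hk : 2 * etaR N - 1 <= 2 * etaR M - 1 by lia.
have gN := subsetP (der_mono G hk) g gG.
have c := IH g x gN xA.
have xG : x \in G := subsetP sAG x xA.
have gG' : g \in G := subsetP (der_sub _ G) g gG.
have yE : [~ x, g] ^ x^-1 = x ^ g * x^-1.
  by rewrite {1}conjgE invgK commgEl mulgA mulKVg.
have yAA : [~ x, g] ^ x^-1 \in A * A^-1.
  rewrite yE; apply: mem_mulg; first by rewrite memJ_norm ?(subsetP nAG).
  by rewrite mem_invg invgK.
have yN : [~ x, g] ^ x^-1 \in N by rewrite memJ_norm ?(subsetP nNG') ?groupV.
have yM : [~ x, g] ^ x^-1 \in M.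
  by apply/negPn/negP => nyM; apply: noy; exists ([~ x, g] ^ x^-1); rewrite ?yN.
by rewrite -(conjgKV x [~ x, g]) memJ_norm ?(subsetP nMG').
Qed.

Lemma chain_ind s (M : {group gT}) : M <| G -> all (fun H : {group gT} => H <| G) s ->
  path (fun H K : {group gT} => (H \subset K) && cyclic (K / H)) M s -> last M s = G ->
  forall g x, g \in G^`(2 * etaR M - 1) -> x \in A -> [~ x, g] \in M.
Proof.
elim: s M => [|N s IHs] M nMG /=.
  move=> _ _ eMG g x gG xA; rewrite eMG.
  apply: groupR; [exact: subsetP sAG x xA | exact: subsetP (der_sub _ G) g gG].
move=> /andP [nNG allS] /andP [/andP [sMN cNM] pS] lastE.
exact: (step nMG nNG sMN cNM (IHs N nNG allS pS lastE)).
Qed.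

End Count.

Lemma dl_le (T : finGroupType) (H : {set T}) n : H^`(n) == 1 -> dl H <= n.
Proof.
move=> h; rewrite /dl; case: (leqP n #|H|) => hn.
  rewrite leqNgt; apply/negP => lt; have := before_find 0 lt.
  by rewrite nth_iota ?ltnS // add0n h.
by apply: leq_trans (find_size _ _) _; rewrite size_iota.
Qed.

Theorem theoremB (gT : finGroupType) (G : {group gT}) (A : {set gT}) :
  supersolvable G -> A \in classes G ->
  dl (G / 'C_G(A)) <= 2 * eta G (A * A^-1) - 1.
Proof.
move=> [s [ls alls ps]] hA.
have etaE : etaR G A 1 = eta G (A * A^-1).
  rewrite /etaR /eta /SS; congr #|_|.
  by rewrite (eq_imset (g := id)) ?imset_id // => C; exact: mulg1.
have key := chain_ind hA (normal1 G) alls ps ls.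
rewrite etaE in key.
have nCG : G \subset 'N('C_G(A)) by rewrite normsI ?normG ?norms_cent ?nAG.
apply: dl_le; rewrite -quotient_der //; apply/eqP/trivgP.
rewrite quotient_sub1 ?(subset_trans (der_sub _ _) nCG) //.
apply/subsetP => g gn; rewrite inE (subsetP (der_sub _ _) g gn) /=.
apply/centP => x xA; have := key g x gn xA; move/set1P => c.
by apply/commute_sym/commgP/eqP.
Qed.
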